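(* For every natural number $k\ge 2$, the class $\mathcal{H}_k$ is closed under taking minors: if $H\in\mathcal{H}_k$ and $G$ is a minor of $H$, then $G\in\mathcal{H}_k$.
   Context: All graphs are finite; parallel edges are allowed, loops are not. A length-function on a graph $G$ is a map $\ell:E(G)\to\mathbb{R}^+$ (strictly positive reals); $\ell(H)=\sum_{e\in E(H)}\ell(e)$ for subgraphs $H$, which carry the restricted length-function. $\mathrm{sd}_G(A)$ is the minimum of $\ell(S)$ over connected subgraphs $S\subseteq G$ with $A\subseteq V(S)$ ($\infty$ if none). $H\subseteq G$ is $k$-geodesic in $G$ if $\mathrm{sd}_H(A)=\mathrm{sd}_G(A)$ for all $A\subseteq V(H)$ with $|A|\le k$, and fully geodesic if it is $k$-geodesic for all $k$. For $k\ge2$, $\mathcal{H}_k$ is the class of all graphs $H$ such that for every graph $G\supseteq H$ and every length-function on $G$ for which $H$ is $k$-geodesic in $G$, $H$ is fully geodesic in $G$. *)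

(* Defs.v *)
From mathcomp Require Import all_boot.
From Stdlib Require Import Reals.
Set Implicit Arguments. Unset Strict Implicit. Unset Printing Implicit Defensive.

(* A finite multigraph: parallel edges allowed, loops not.  Each edge has an
   (arbitrarily oriented) pair of distinct endpoints. *)
Record graph := Graph {
  gV : finType;
  gE : finType;
  gends : gE -> gV * gV;
  gnoloop : forall e, (gends e).1 != (gends e).2 }.

Section GraphDefs.
Variable G : graph.
Local Notation V := (gV G).
Local Notation E := (gE G).

Definition joins (e : E) (x y : V) : bool :=
  (gends e == (x, y)) || (gends e == (y, x)).

Definition subg := ({set V} * {set E})%type.

Definition is_subg (S : subg) : bool :=
  [forall e in S.2, ((gends e).1 \in S.1) && ((gends e).2 \in S.1)].

Definition adj_in (S : subg) : rel V :=
  fun x y => [&& x \in S.1, y \in S.1 & [exists e in S.2, joins e x y]].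

Definition connectedb (S : subg) : bool :=
  (S.1 != set0) && [forall x in S.1, forall y in S.1, connect (adj_in S) x y].

Definition lsum (l : E -> R) (s : seq E) : R := foldr Rplus 0%R (map l s).
Definition glength (l : E -> R) (S : subg) : R := lsum l (enum S.2).

Definition omin (a b : option R) : option R :=
  match a, b with
  | None, _ => b
  | _, None => a
  | Some x, Some y => Some (Rmin x y)
  end.

(* Steiner distance: minimum length of a connected subgraph containing A;
   None encodes infinity. *)
Definition sd (l : E -> R) (A : {set V}) : option R :=
  foldr (fun S acc => omin (Some (glength l S)) acc) None
    [seq S <- enum {: {set V} * {set E}} |
       [&& is_subg S, connectedb S & A \subset S.1]].

Definition length_fun (l : E -> R) : Prop := forall e, (0 < l e)%R.

Definition induced (B : {set V}) : subg :=
  (B, [set e | ((gends e).1 \in B) && ((gends e).2 \in B)]).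
End GraphDefs.

Definition embedding (H G : graph) (fV : gV H -> gV G) (fE : gE H -> gE G) : Prop :=
  injective fV /\ injective fE /\
  forall e, joins (fE e) (fV (gends e).1) (fV (gends e).2).

Definition k_geodesic (k : nat) (H G : graph) (fV : gV H -> gV G)
    (fE : gE H -> gE G) (l : gE G -> R) : Prop :=
  forall A : {set gV H}, #|A| <= k ->
    sd (fun e => l (fE e)) A = sd l (fV @: A).

Definition fully_geodesic (H G : graph) (fV : gV H -> gV G)
    (fE : gE H -> gE G) (l : gE G -> R) : Prop :=
  forall A : {set gV H}, sd (fun e => l (fE e)) A = sd l (fV @: A).

Definition in_Hk (k : nat) (H : graph) : Prop :=
  forall (G : graph) (fV : gV H -> gV G) (fE : gE H -> gE G) (l : gE G -> R),
    embedding fV fE -> length_fun l ->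
    k_geodesic k fV fE l -> fully_geodesic fV fE l.

Definition minor (G H : graph) : Prop :=
  exists (B : gV G -> {set gV H}) (fE : gE G -> gE H),
    (forall v, connectedb (induced (B v))) /\
    (forall u v, u != v -> [disjoint B u & B v]) /\
    injective fE /\
    (forall e, exists x y, [/\ x \in B (gends e).1, y \in B (gends e).2
                              & joins (fE e) x y]).

(* Main.v *)
Require Import Defs.
From HB Require Import structures.
From mathcomp Require Import all_boot.
From Stdlib Require Import Reals Lra Classical.
Set Implicit Arguments. Unset Strict Implicit. Unset Printing Implicit Defensive.

HB.instance Definition _ := Monoid.isComLaw.Build R 0%R Rplus (fun x y z => esym (Rplus_assoc x y z)) Rplus_comm Rplus_0_l.

Notation "\rsum_ ( i 'in' A ) F" := (\big[Rplus/0%R]_(i in A) F) (at level 41, F at level 41, i, A at level 50).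

Lemma glengthE (G : graph) (l : gE G -> R) (S : subg G) :
  glength l S = \rsum_(e in S.2) l e.
Proof.
rewrite /glength /lsum -big_enum /=.
elim: (enum S.2) => [|a s IH]; first by rewrite big_nil.
by rewrite big_cons /= IH.
Qed.

Lemma rsum_ge0 (T : finType) (A : {set T}) (f : T -> R) :
  (forall x, x \in A -> 0 <= f x)%R -> (0 <= \rsum_(x in A) f x)%R.
Proof. move=> H; apply: (big_ind (fun x => 0 <= x)%R); [lra| move=> *; lra|exact: H]. Qed.

Lemma rsum_le (T : finType) (A : {set T}) (f g : T -> R) :
  (forall x, x \in A -> f x <= g x)%R -> (\rsum_(x in A) f x <= \rsum_(x in A) g x)%R.
Proof. move=> H; apply: (big_ind2 (fun x y => x <= y)%R); [lra| move=> *; lra|exact: H]. Qed.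

Lemma rsum_sub (T : finType) (A B : {set T}) (f : T -> R) :
  (forall x, x \in B -> 0 <= f x)%R -> A \subset B ->
  (\rsum_(x in A) f x <= \rsum_(x in B) f x)%R.
Proof.
move=> H sAB. rewrite [X in (_ <= X)%R](big_setID A) /=.
have -> : B :&: A = A by apply/setIidPr.
have : (0 <= \rsum_(x in B :\: A) f x)%R.
  apply: rsum_ge0 => x; rewrite inE => /andP[_]; exact: H.
lra.
Qed.

Lemma rsum_U (T : finType) (A B : {set T}) (f : T -> R) :
  (forall x, 0 <= f x)%R ->
  (\rsum_(x in A :|: B) f x <= \rsum_(x in A) f x + \rsum_(x in B) f x)%R.
Proof.
move=> H. rewrite [X in (X <= _)%R](big_setID A) /=.
have -> : (A :|: B) :&: A = A by apply/setIidPr; exact: subsetUl.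
have : (\rsum_(x in (A :|: B) :\: A) f x <= \rsum_(x in B) f x)%R.
  apply: rsum_sub => //. apply/subsetP => x; rewrite !inE; case/andP=> /negPf ->. done.
lra.
Qed.

Lemma rsumD1 (T : finType) (A : {set T}) (f : T -> R) x :
  x \in A -> \rsum_(y in A) f y = (f x + \rsum_(y in A :\ x) f y)%R.
Proof.
move=> xA. rewrite (bigD1 x) //=. congr (_ + _)%R. apply: eq_bigl => y. by rewrite !inE andbC.
Qed.

Lemma rsum_disj (T : finType) (A B : {set T}) (f : T -> R) :
  [disjoint A & B] -> \rsum_(x in A :|: B) f x = (\rsum_(x in A) f x + \rsum_(x in B) f x)%R.
Proof.
move=> d. rewrite (big_setID A) /=.
have -> : (A :|: B) :&: A = A by apply/setIidPr; exact: subsetUl.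
have -> : (A :|: B) :\: A = B; last by [].
apply/setP => x; rewrite !inE. case xB: (x \in B); last by rewrite ?andbF ?orbF; case: (x \in A).
have : x \notin A by move: d => /disjoint_setI0 /setP /(_ x); rewrite !inE xB andbT => ->.
by rewrite orbT; move=> ->.
Qed.

Lemma rsum_imset (T U : finType) (A : {set T}) (h : T -> U) (f : U -> R) :
  (forall y, 0 <= f y)%R ->
  (\rsum_(y in h @: A) f y <= \rsum_(x in A) f (h x))%R.
Proof.
move=> H. rewrite (partition_big_imset h) /=. apply: rsum_le => y /imsetP [x xA ->].
rewrite (bigD1 x) /=; last by rewrite xA eqxx.
have : (0 <= \big[Rplus/0%R]_(i | (i \in A) && (h i == h x) && (i != x)) f (h i))%R.
  apply: (big_ind (fun x => 0 <= x)%R); [lra| move=> *; lra| move=> *; exact: H].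
lra.
Qed.

Lemma connect_map (T U : finType) (e : rel T) (e' : rel U) (f : T -> U) :
  (forall a b, e a b -> connect e' (f a) (f b)) ->
  forall x y, connect e x y -> connect e' (f x) (f y).
Proof.
move=> H x y /connectP [p pth ->]; elim: p x pth => [|z p IH] x /=; first by rewrite connect0.
case/andP=> exz pth; exact: connect_trans (H _ _ exz) (IH _ pth).
Qed.

Lemma connect_mono (T : finType) (e e' : rel T) :
  (forall a b, e a b -> connect e' a b) -> forall x y, connect e x y -> connect e' x y.
Proof. move=> H x y; by have := connect_map (f := fun z : T => z) H (x := x) (y := y). Qed.

Lemma connect_closed_pred (T : finType) (e : rel T) (P : pred T) x y :
  (forall u v, P u -> e u v -> P v) -> P x -> connect e x y -> P y.
Proof.
move=> H Px /connectP [p pth ->]; elim: p x Px pth => [|z p IH] x Px //=.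
case/andP=> exz pth; exact: IH (H _ _ Px exz) pth.
Qed.

Lemma conn_restrict (T : finType) (e : rel T) (P : pred T) x y :
  (forall u v, P u -> e u v -> P v) -> P x -> connect e x y ->
  connect (fun u v => [&& P u, P v & e u v]) x y.
Proof.
move=> H Px /connectP [p pth ->]; elim: p x Px pth => [|z p IH] x Px /=; first by rewrite connect0.
case/andP=> exz pth; have Pz := H _ _ Px exz.
apply: connect_trans (IH _ Pz pth); apply: connect1; by rewrite Px Pz exz.
Qed.

Lemma connect_step (T : finType) (e : rel T) x y :
  connect e x y -> x != y -> exists z, e x z.
Proof.
move=> /connectP [[|z p] pth ->] /=; first by rewrite eqxx.
case/andP: pth => exz _ _; by exists z.
Qed.

Lemma foldr_omin_spec (T : eqType) (f : T -> R) (L : seq T) :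
  (foldr (fun a acc => omin (Some (f a)) acc) None L = None <-> L = [::]) /\
  (forall x, foldr (fun a acc => omin (Some (f a)) acc) None L = Some x ->
     (exists a, a \in L /\ f a = x) /\ forall a, a \in L -> (x <= f a)%R).
Proof.
elim: L => [|S L [IH1 IH2]] /=; first by split.
split; first by case: (foldr _ _ _).
move=> x; case E: (foldr _ _ _) => [y|] /= [<-].
  case: (IH2 y E) => [[S1 [S1L <-]] H2].
  rewrite /Rmin; case: Rle_dec => hle; split.
  - by exists S; rewrite inE eqxx.
  - move=> S2; rewrite inE => /orP [/eqP -> | /H2]; lra.
  - by exists S1; rewrite inE S1L orbT.
  - move=> S2; rewrite inE => /orP [/eqP -> | /H2]; lra.
have L0 : L = [::] by case: IH1 => /(_ E).
split; first by exists S; rewrite inE eqxx.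
by move=> S2; rewrite L0 inE => /eqP ->; lra.
Qed.

Section GraphLemmas.
Variable K : graph.
Implicit Types (S : subg K) (l : gE K -> R).

Lemma joins_sym (e : gE K) x y : joins e x y = joins e y x.
Proof. by rewrite /joins orbC. Qed.

Lemma joins_ends (e : gE K) : joins e (gends e).1 (gends e).2.
Proof. by rewrite /joins; case: (gends e) => a b /=; rewrite eqxx. Qed.

Lemma joinsP (e : gE K) x y : joins e x y ->
  (x = (gends e).1 /\ y = (gends e).2) \/ (x = (gends e).2 /\ y = (gends e).1).
Proof. by rewrite /joins; case: (gends e) => a b /= /orP [] /eqP [-> ->]; [left|right]. Qed.

Lemma joins_neq (e : gE K) x y : joins e x y -> x != y.
Proof. by case/joinsP => [][-> ->]; [|rewrite eq_sym]; apply: gnoloop. Qed.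

Lemma adj_sym S : symmetric (adj_in S).
Proof.
move=> x y; rewrite /adj_in; apply/and3P/and3P => [][-> -> /existsP[e /andP[eS j]]];
 split=> //; apply/existsP; exists e; by rewrite eS joins_sym j.
Qed.

Lemma conn_sym S x y : connect (adj_in S) x y = connect (adj_in S) y x.
Proof. by apply: sym_connect_sym; exact: adj_sym. Qed.

Lemma connP S x y : connectedb S -> x \in S.1 -> y \in S.1 -> connect (adj_in S) x y.
Proof. by case/andP=> _ /forall_inP H xS yS; move/forall_inP: (H x xS); apply. Qed.

Lemma connectedI S r : r \in S.1 -> (forall z, z \in S.1 -> connect (adj_in S) r z) ->
  connectedb S.
Proof.
move=> rS H; apply/andP; split; first by apply/set0Pn; exists r.
apply/forall_inP => x xS; apply/forall_inP => y yS.
apply: connect_trans (H y yS); by rewrite conn_sym H.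
Qed.

Lemma adj_inP S x y : adj_in S x y ->
  [/\ x \in S.1, y \in S.1 & exists2 e, e \in S.2 & joins e x y].
Proof. by case/and3P=> -> -> /existsP [e /andP [eS j]]; split=> //; exists e. Qed.

Lemma adj_inI S x y e : x \in S.1 -> y \in S.1 -> e \in S.2 -> joins e x y -> adj_in S x y.
Proof. by move=> xS yS eS j; rewrite /adj_in xS yS; apply/existsP; exists e; rewrite eS. Qed.

Lemma is_subgP S : is_subg S -> forall e, e \in S.2 -> (gends e).1 \in S.1 /\ (gends e).2 \in S.1.
Proof. by move/forall_inP => H e /H /andP. Qed.

Lemma is_subgI S : (forall e, e \in S.2 -> (gends e).1 \in S.1 /\ (gends e).2 \in S.1) -> is_subg S.
Proof. by move=> H; apply/forall_inP => e /H [-> ->]. Qed.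

Lemma joins_in S e x y : is_subg S -> e \in S.2 -> joins e x y -> x \in S.1 /\ y \in S.1.
Proof. move=> /is_subgP H eS; case: (H e eS) => a b /joinsP [][-> ->]; by split. Qed.

Definition valid (A : {set gV K}) S := [&& is_subg S, connectedb S & A \subset S.1].

Lemma glength_ge0 l S : length_fun l -> (0 <= glength l S)%R.
Proof. move=> Hl; rewrite glengthE; apply: rsum_ge0 => x _; apply: Rlt_le; exact: Hl. Qed.

Lemma sd_spec l A :
  (sd l A = None <-> forall S, ~~ valid A S) /\
  (forall x, sd l A = Some x ->
     (exists S, valid A S /\ glength l S = x) /\ forall S, valid A S -> (x <= glength l S)%R).
Proof.
rewrite /sd.
have memi S : (S \in [seq S <- enum {: {set gV K} * {set gE K}} |
       [&& is_subg S, connectedb S & A \subset S.1]]) = valid A S.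
  by rewrite mem_filter mem_enum andbT.
case: (foldr_omin_spec (glength l) [seq S <- enum {: {set gV K} * {set gE K}} |
       [&& is_subg S, connectedb S & A \subset S.1]]) => [IH1 IH2]; split.
  split.
    move/IH1 => E S; by rewrite -memi E.
  move=> H; apply/IH1; move: memi.
  case: [seq _ <- _ | _] => [//|a L'] memi'.
  by move: (H a); rewrite -memi' inE eqxx.
move=> x E; case: (IH2 x E) => [[S [SL <-]] H2]; split.
  by exists S; rewrite -memi.
move=> S1; rewrite -memi; exact: H2.
Qed.

Lemma sd_None l A : sd l A = None -> forall S, ~~ valid A S.
Proof. by case: (sd_spec l A) => [[H _] _] /H. Qed.

Lemma sd_Some l A x : sd l A = Some x ->
   (exists S, valid A S /\ glength l S = x) /\ forall S, valid A S -> (x <= glength l S)%R.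
Proof. by case: (sd_spec l A) => _ /(_ x). Qed.

Lemma sd_exists l A S : valid A S -> exists x, sd l A = Some x.
Proof.
move=> v; case E: (sd l A) => [x|]; first by exists x.
by move: (sd_None E S); rewrite v.
Qed.

End GraphLemmas.

Lemma sd_eq (K1 K2 : graph) (l1 : gE K1 -> R) (l2 : gE K2 -> R) A1 A2 :
  (forall S, valid A1 S -> exists2 S', valid A2 S' & (glength l2 S' <= glength l1 S)%R) ->
  (forall S, valid A2 S -> exists2 S', valid A1 S' & (glength l1 S' <= glength l2 S)%R) ->
  sd l1 A1 = sd l2 A2.
Proof.
move=> H12 H21.
case E1: (sd l1 A1) => [x1|]; case E2: (sd l2 A2) => [x2|] //.
- case: (sd_Some E1) => [[S1 [v1 <-]] m1]; case: (sd_Some E2) => [[S2 [v2 <-]] m2].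
  case: (H12 S1 v1) => S2' v2' le2; case: (H21 S2 v2) => S1' v1' le1.
  have := m1 _ v1'; have := m2 _ v2'; move=> *; congr Some; lra.
- case: (sd_Some E1) => [[S1 [v1 _]] _]; case: (H12 S1 v1) => S2' v2' _.
  by move: (sd_None E2 S2'); rewrite v2'.
- case: (sd_Some E2) => [[S2 [v2 _]] _]; case: (H21 S2 v2) => S1' v1' _.
  by move: (sd_None E1 S1'); rewrite v1'.
Qed.

Lemma sd_neq (K1 K2 : graph) (l1 : gE K1 -> R) (l2 : gE K2 -> R) A1 A2 S2 :
  valid A2 S2 -> (forall S, valid A1 S -> (glength l2 S2 < glength l1 S)%R) ->
  sd l1 A1 <> sd l2 A2.
Proof.
move=> v2 H E. case E2: (sd l2 A2) => [x2|]; last by move: (sd_None E2 S2); rewrite v2.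
case: (sd_Some E2) => [_ m2]. have := m2 _ v2.
rewrite -E in E2. case: (sd_Some E2) => [[S1 [v1 <-]] _]. have := H _ v1. lra.
Qed.

Section Minimal.
Variable K : graph.
Implicit Types (S : subg K) (l : gE K -> R) (A : {set gV K}).

Definition sub_sg S' S := (S'.1 \subset S.1) && (S'.2 \subset S.2).
Definition minimal A S := valid A S /\ forall S', valid A S' -> sub_sg S' S -> S' = S.

Lemma cost_sub l S' S : length_fun l -> sub_sg S' S -> (glength l S' <= glength l S)%R.
Proof.
move=> Hl /andP [_ s2]; rewrite !glengthE; apply: rsum_sub => // x _; apply: Rlt_le; exact: Hl.
Qed.

Lemma sub_sg_trans S1 S2 S3 : sub_sg S1 S2 -> sub_sg S2 S3 -> sub_sg S1 S3.
Proof.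
by case/andP=> a b /andP [c d]; apply/andP; split; [exact: subset_trans a c|exact: subset_trans b d].
Qed.

Lemma exists_minimal A S : valid A S -> exists S0, minimal A S0 /\ sub_sg S0 S.
Proof.
move: {2}(#|S.1| + #|S.2|) (leqnn (#|S.1| + #|S.2|)) => n.
elim: n S => [|n IH] S hs v.
- exists S; split; last by rewrite /sub_sg !subxx.
  split=> // S' v' /andP [s1 s2].
  move: hs; rewrite leqn0 addn_eq0 => /andP [/eqP /cards0_eq e1 /eqP /cards0_eq e2].
  case: S' v' s1 s2 {v} => [a b] /= _; rewrite e1 e2 !subset0 => /eqP -> /eqP ->.
  by case: S e1 e2 => ? ? /= -> ->.
- case: (boolP [exists S', [&& valid A S', sub_sg S' S & S' != S]]).
  + case/existsP => S' /and3P [v' ss nS].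
    have hs' : #|S'.1| + #|S'.2| <= n.
      case/andP: ss => s1 s2.
      have lt : #|S'.1| + #|S'.2| < #|S.1| + #|S.2|.
        case: (boolP (S'.1 == S.1)) => e1.
          case: (boolP (S'.2 == S.2)) => e2.
            by move: nS; case: S' {v' s1 s2} e1 e2 => a b /= /eqP -> /eqP ->; case: S {hs v} => ? ?; rewrite eqxx.
          rewrite (eqP e1) ltn_add2l; apply: proper_card; by rewrite properEneq e2 s2.
        rewrite -addSn; apply: leq_add; last exact: subset_leq_card.
        by apply: proper_card; rewrite properEneq e1 s1.
      by rewrite -ltnS; apply: leq_trans hs.
    case: (IH S' hs' v') => S0 [m s0]; exists S0; split => //; exact: sub_sg_trans s0 ss.
  + rewrite negb_exists => /forallP H; exists S; split; last by rewrite /sub_sg !subxx.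
    split=> // S' v' ss; apply/eqP; move: (H S'); by rewrite v' ss /= negbK.
Qed.

Variables (l : gE K -> R) (A : {set gV K}) (S : subg K) (e : gE K).
Hypotheses (mS : minimal A S) (eS : e \in S.2).

Definition Sm : subg K := (S.1, S.2 :\ e).
Definition side z : {set gV K} := [set w in S.1 | connect (adj_in Sm) z w].
Definition Sside z : subg K := (side z, [set f in S.2 :\ e | ((gends f).1 \in side z) && ((gends f).2 \in side z)]).

Lemma vS : valid A S. Proof. by case: mS. Qed.
Lemma subgS : is_subg S. Proof. by case/and3P: vS. Qed.
Lemma connS : connectedb S. Proof. by case/and3P: vS. Qed.
Lemma AS : A \subset S.1. Proof. by case/and3P: vS. Qed.

Lemma adjSm_S u w : adj_in Sm u w -> adj_in S u w.
Proof.
case/adj_inP => /= uS wS [f]; rewrite inE => /andP [_ fS] j; exact: adj_inI uS wS fS j.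
Qed.

Section Ends.
Variables x y : gV K.
Hypothesis jxy : joins e x y.

Lemma xS : x \in S.1. Proof. by case: (joins_in subgS eS jxy). Qed.
Lemma yS : y \in S.1. Proof. by case: (joins_in subgS eS jxy). Qed.

Lemma adjS_cases u w : adj_in S u w ->
  adj_in Sm u w \/ ((u = x /\ w = y) \/ (u = y /\ w = x)).
Proof.
case/adj_inP => uS wS [f fS j]. case: (eqVneq f e) => [fe|fne].
  right; subst f; case/joinsP: j => [][-> ->]; case/joinsP: jxy => [][-> ->]; tauto.
by left; apply: (@adj_inI _ Sm u w f uS wS _ j); rewrite /= !inE fne.
Qed.

Lemma bridge : ~~ connect (adj_in Sm) x y.
Proof.
apply/negP => cxy.
have sub : forall u w, adj_in S u w -> connect (adj_in Sm) u w.
  move=> u w /adjS_cases [h|[[-> ->]|[-> ->]]]; [exact: connect1| done| by rewrite conn_sym].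
have vm : valid A Sm.
  apply/and3P; split.
  - apply: is_subgI => f; rewrite inE => /andP [_ fS]; exact: is_subgP subgS f fS.
  - apply/andP; split; first by case/andP: connS.
    apply/forall_inP => u uS; apply/forall_inP => w wS.
    exact: (connect_mono sub (connP connS uS wS)).
  - exact: AS.
have := (proj2 mS) Sm vm; rewrite /sub_sg subxx subD1set => /(_ isT) E.
by move: eS; rewrite -{1}E /= !inE eqxx.
Qed.

Lemma sides_cover z : z \in S.1 -> (z \in side x) || (z \in side y).
Proof.
move=> zS; rewrite !inE zS /=.
have cz := connP connS xS zS.
apply: (connect_closed_pred (P := fun w => connect (adj_in Sm) x w || connect (adj_in Sm) y w) _ _ cz).
  move=> u w Pu /adjS_cases [h|[[_ ->]|[_ ->]]].
  - by case/orP: Pu => c; apply/orP; [left|right]; apply: connect_trans c (connect1 h).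
  - by rewrite connect0 orbT.
  - by rewrite connect0.
by rewrite connect0.
Qed.

Lemma side_conn z : z \in side x -> connect (adj_in Sm) x z.
Proof. by rewrite inE => /andP []. Qed.

Lemma sides_disj : [disjoint side x & side y].
Proof.
apply/pred0P => z /=; apply/negP => /andP [/side_conn c1]; rewrite inE => /andP [_ c2].
by move: bridge; rewrite (connect_trans c1) // conn_sym.
Qed.

Lemma x_side : x \in side x. Proof. by rewrite inE xS connect0. Qed.

Lemma Sside_subg : is_subg (Sside x).
Proof. apply: is_subgI => f; rewrite inE => /andP [_ /andP [-> ->]]; done. Qed.

Lemma Sside_conn : connectedb (Sside x).
Proof.
apply: (@connectedI _ (Sside x) x x_side) => z /side_conn cz.
have := conn_restrict (P := fun w => connect (adj_in Sm) x w) _ (connect0 _ x) cz.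
have H : forall u v, connect (adj_in Sm) x u -> adj_in Sm u v -> connect (adj_in Sm) x v.
  by move=> u v c a; apply: connect_trans c (connect1 a).
move=> /(_ H); apply: connect_mono => u w /and3P [cu cw a]; apply: connect1.
case/adj_inP: a => /= uS wS [f fSm j].
have [uX wX] : u \in side x /\ w \in side x by rewrite !inE uS wS cu cw.
apply: (@adj_inI _ (Sside x) u w f uX wX _ j); rewrite /= inE fSm /=.
by case/joinsP: j => [][<- <-]; rewrite uX wX.
Qed.

Lemma Sside_sub : sub_sg (Sside x) S.
Proof.
apply/andP; split; apply/subsetP => z; rewrite inE => /andP [] //.
by rewrite inE => /andP [].
Qed.

End Ends.

Lemma side_has_A x y : joins e x y -> exists2 a, a \in A & a \in side x.
Proof.
move=> jxy; have jyx : joins e y x by rewrite joins_sym.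
case: (boolP [exists a in A, a \in side x]) => [/exists_inP [a aA ax]|]; first by exists a.
rewrite negb_exists_in => /forall_inP H.
have vy : valid A (Sside y).
  apply/and3P; split; [exact: Sside_subg|exact: (Sside_conn jyx)|].
  apply/subsetP => a aA /=; have aS := subsetP AS a aA.
  by case/orP: (sides_cover jxy aS) => //; rewrite (negbTE (H a aA)).
have E := (proj2 mS) _ vy (Sside_sub y).
have := xS jxy; rewrite -E /= => xy.
by move: (sides_disj jxy) => /pred0P /(_ x) /=; rewrite (x_side jxy) xy.
Qed.

Lemma Sside_edge z f : f \in (Sside z).2 ->
  [/\ f \in S.2, f != e, (gends f).1 \in side z & (gends f).2 \in side z].
Proof. by rewrite [f \in _]inE in_setD1 => /andP [/andP [-> ->] /andP [-> ->]]. Qed.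

Lemma bridge_cost x y : length_fun l -> joins e x y ->
  (glength l (Sside x) + glength l (Sside y) + l e <= glength l S)%R.
Proof.
move=> Hl jxy; have jyx : joins e y x by rewrite joins_sym.
rewrite !glengthE.
have d1 : [disjoint (Sside x).2 & (Sside y).2].
  apply/pred0P => f /=; apply/negP => /andP [/Sside_edge [_ _ fx _] /Sside_edge [_ _ fy _]].
  by move: (sides_disj jxy) => /pred0P /(_ (gends f).1) /=; rewrite fx fy.
have d2 : [disjoint (Sside x).2 :|: (Sside y).2 & [set e]].
  apply/pred0P => f /=; apply/negP; rewrite [f \in _ :|: _]inE in_set1 => /andP [/orP [] /Sside_edge [_ fe _ _] /eqP ffe];
  by move: fe; rewrite ffe eqxx.
rewrite -(rsum_disj _ d1).
have -> : l e = \rsum_(f in [set e]) l f by rewrite big_set1.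
rewrite -(rsum_disj _ d2). apply: rsum_sub; first by move=> f _; apply: Rlt_le; exact: Hl.
apply/subsetP => f; rewrite [f \in _ :|: _]inE [f \in _ :|: _]inE in_set1 => /orP [/orP [] /Sside_edge [] //|/eqP ->] //.
Qed.

End Minimal.

Lemma rsum_const (T : finType) (X : {set T}) (c : R) :
  \rsum_(x in X) c = (INR #|X| * c)%R.
Proof.
rewrite big_const; elim: #|X| => [|n IH]; first by rewrite /=; lra.
rewrite [iter _ _ _]/= IH S_INR; lra.
Qed.

Lemma rsum_split (T : finType) (X : {set T}) (f g : T -> R) :
  \rsum_(x in X) (f x + g x)%R = (\rsum_(x in X) f x + \rsum_(x in X) g x)%R.
Proof. by rewrite big_split. Qed.

Lemma rsum_imset_inj (T U : finType) (A : {set T}) (h : T -> U) (f : U -> R) :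
  injective h -> \rsum_(y in h @: A) f y = \rsum_(x in A) f (h x).
Proof. move=> hi; rewrite big_imset //; move=> x y _ _; exact: hi. Qed.

Lemma blob_conn (U W : finType) (eU : rel U) (eW : rel W) (beta : U -> {set W}) (Qp : pred U) :
  (forall u v, eU u v -> Qp u /\ Qp v) ->
  (forall u, Qp u -> beta u != set0) ->
  (forall u, Qp u -> forall x y, x \in beta u -> y \in beta u -> connect eW x y) ->
  (forall u v, eU u v -> exists x, exists y, [/\ x \in beta u, y \in beta v & connect eW x y]) ->
  forall u v, Qp u -> connect eU u v -> forall x y, x \in beta u -> y \in beta v -> connect eW x y.
Proof.
move=> hQ hne hin hstep u v Qu /connectP [p pth ->]; elim: p u Qu pth => [|z p IH] u Qu /=.
  move=> _ x y xu yu; exact: hin Qu x y xu yu.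
case/andP => euz pth x y xu yv.
case: (hQ _ _ euz) => _ Qz.
case: (hstep _ _ euz) => x1 [y1 [x1u y1z c1]].
apply: connect_trans (hin _ Qu _ _ xu x1u) _; apply: connect_trans c1 _.
exact: IH Qz pth y1 y y1z yv.
Qed.

Section Generic.
Variables K1 K2 : graph.

Lemma embed_valid (fV : gV K1 -> gV K2) (fE : gE K1 -> gE K2) (l : gE K2 -> R) A S :
  embedding fV fE -> valid A S ->
  exists2 S', valid (fV @: A) S' & glength l S' = glength (fun e => l (fE e)) S.
Proof.
case=> fVi [fEi fj] /and3P [sS cS aS].
exists (fV @: S.1, fE @: S.2); last by rewrite !glengthE /= rsum_imset_inj.
apply/and3P; split.
- apply: is_subgI => f /imsetP [e eS ->].
  case: (is_subgP sS eS) => h1 h2.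
  by case/joinsP: (fj e) => [][<- <-]; split; apply: imset_f.
- case/andP: (cS) => ne _; apply/andP; split.
    case/set0Pn: ne => x xS; apply/set0Pn; exists (fV x); exact: imset_f.
  apply/forall_inP => _ /imsetP [x xS ->]; apply/forall_inP => _ /imsetP [y yS ->].
  apply: (connect_map (e := adj_in S)) (connP cS xS yS) => a b /adj_inP [aS1 bS1 [e eS j]].
  apply: connect1; apply: (@adj_inI _ (fV @: S.1, fE @: S.2) _ _ (fE e)); rewrite /= ?imset_f //.
  by case/joinsP: j (fj e) => [][-> ->] //; rewrite joins_sym.
- exact: imsetS.
Qed.

Variables (phi : gV K1 -> gV K2) (psi : gE K1 -> option (gE K2)) (S : subg K1).
Hypothesis sS : is_subg S.
Hypothesis hpsi : forall e, e \in S.2 ->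
  match psi e with
  | None => phi (gends e).1 = phi (gends e).2
  | Some f => is_true (joins f (phi (gends e).1) (phi (gends e).2))
  end.

Definition himg : subg K2 := (phi @: S.1, [set f | [exists e in S.2, psi e == Some f]]).

Lemma himg_subg : is_subg himg.
Proof.
apply: is_subgI => f; rewrite inE => /exists_inP [e eS /eqP pe].
have := hpsi eS; rewrite pe => j; case: (is_subgP sS eS) => h1 h2.
by case/joinsP: j => [][<- <-]; split; apply: imset_f.
Qed.

Lemma himg_conn : connectedb S -> connectedb himg.
Proof.
move=> cS; case/andP: (cS) => ne _; apply/andP; split.
  case/set0Pn: ne => x xS; apply/set0Pn; exists (phi x); exact: imset_f.
apply/forall_inP => _ /imsetP [x xS ->]; apply/forall_inP => _ /imsetP [y yS ->].
apply: (connect_map (e := adj_in S)) (connP cS xS yS) => a b /adj_inP [aS1 bS1 [e eS j]].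
have := hpsi eS; case pe: (psi e) => [f|] h.
  apply: connect1; apply: (@adj_inI _ himg _ _ f); rewrite /= ?imset_f //.
    by rewrite inE; apply/exists_inP; exists e; rewrite // pe.
  by case/joinsP: j => [][-> ->] //; rewrite joins_sym.
by case/joinsP: j => [][-> ->]; rewrite h connect0.
Qed.

Lemma himg_A (A : {set gV K1}) : A \subset S.1 -> phi @: A \subset himg.1.
Proof. exact: imsetS. Qed.

Lemma himg_cost (l : gE K2 -> R) : (forall f, 0 <= l f)%R ->
  (glength l himg <= \rsum_(e in S.2) match psi e with Some f => l f | None => 0%R end)%R.
Proof.
move=> l0; rewrite glengthE /=.
pose c' (o : option (gE K2)) := match o with Some f => l f | None => 0%R end.
have c0 : forall o, (0 <= c' o)%R by move=> [f|] /=; [exact: l0|lra].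
have -> : \rsum_(f in [set f | [exists e in S.2, psi e == Some f]]) l f =
          \rsum_(o in Some @: [set f | [exists e in S.2, psi e == Some f]]) c' o.
  by rewrite rsum_imset_inj //; move=> a b [].
apply: Rle_trans (@rsum_imset _ _ S.2 psi _ c0).
apply: rsum_sub => //; apply/subsetP => o /imsetP [f fP ->]; move: fP.
rewrite inE => /exists_inP [e eS /eqP pe]; rewrite -pe; exact: imset_f.
Qed.
End Generic.

Lemma sd_empty (K : graph) (l : gE K -> R) (v : gV K) : length_fun l -> sd l set0 = Some 0%R.
Proof.
move=> Hl.
have v0 : valid set0 (([set v], set0) : subg K).
  apply/and3P; split; [by apply: is_subgI => f; rewrite inE|
    |by rewrite sub0set].
  apply: (@connectedI _ ([set v], set0) v); first by rewrite inE.
  by move=> z; rewrite inE => /eqP ->; rewrite connect0.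
case: (sd_exists l v0) => x E; rewrite E; congr Some.
case: (sd_Some E) => [[S [vS <-]] m]; have := m _ v0.
have g0 : glength l (([set v], set0) : subg K) = 0%R by rewrite glengthE /= big_set0.
have := glength_ge0 S Hl; rewrite g0; lra.
Qed.

Lemma witness (G G' : graph) (fV : gV G -> gV G') (fE : gE G -> gE G') (l : gE G' -> R) A0 :
  embedding fV fE -> length_fun l ->
  sd (fun e => l (fE e)) A0 <> sd l (fV @: A0) ->
  exists S', exists c, exists g, [/\ valid (fV @: A0) S', glength l S' = c, (0 < g)%R &
     forall Q, valid A0 Q -> (c + g <= glength (fun e => l (fE e)) Q)%R].
Proof.
move=> emb Hl neq.
case E2: (sd l (fV @: A0)) => [c|]; last first.
  case E1: (sd (fun e => l (fE e)) A0) => [s|]; last by move: neq; rewrite E1 E2.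
  case: (sd_Some E1) => [[Q [vQ _]] _]; case: (embed_valid l emb vQ) => S' vS' _.
  by move: (sd_None E2 S'); rewrite vS'.
case: (sd_Some E2) => [[S' [vS' hc]] mc].
case E1: (sd (fun e => l (fE e)) A0) => [s|].
  case: (sd_Some E1) => [[Q [vQ hs]] ms].
  case: (embed_valid l emb vQ) => S'' vS'' hS''.
  have le : (c <= s)%R by rewrite -hs -hS''; exact: mc.
  have ne : s <> c by move=> e; apply: neq; rewrite E1 E2 e.
  exists S', c, (s - c)%R; split=> //; first lra.
  move=> Q1 v1; have := ms _ v1; lra.
exists S', c, 1%R; split => //; first lra.
by move=> Q vQ; move: (sd_None E1 Q); rewrite vQ.
Qed.

Lemma adj_mono (K : graph) (S1 S2 : subg K) a b :
  S1.1 \subset S2.1 -> S1.2 \subset S2.2 -> adj_in S1 a b -> adj_in S2 a b.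
Proof.
move=> s1 s2 /adj_inP [aS bS [e eS j]].
apply: (@adj_inI _ S2 a b e); by [apply: (subsetP s1)|apply: (subsetP s1)|apply: (subsetP s2)|].
Qed.

Section Construction.
Variables (H G G' : graph) (B : gV G -> {set gV H}) (mE : gE G -> gE H)
  (fV : gV G -> gV G') (fE : gE G -> gE G') (l : gE G' -> R) (eps M : R) (k : nat) (v0 : gV G).
Hypotheses (hBc : forall v, connectedb (induced (B v)))
  (hBd : forall u v, u != v -> [disjoint B u & B v]) (hmEi : injective mE)
  (hmE : forall g, exists x y, [/\ x \in B (gends g).1, y \in B (gends g).2 & joins (mE g) x y])
  (hemb : embedding fV fE) (hl : length_fun l) (hkg : k_geodesic k fV fE l)
  (heps : (0 < eps)%R) (hM : (0 < M)%R).

Lemma B_ne v : exists x, x \in B v.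
Proof. by case/andP: (hBc v) => /set0Pn [x xB] _; exists x. Qed.

Definition rep v := xchoose (B_ne v).
Lemma rep_in v : rep v \in B v. Proof. exact: xchooseP. Qed.

Lemma B_uniq x u v : x \in B u -> x \in B v -> u = v.
Proof.
move=> xu xv; case: (eqVneq u v) => // /hBd /pred0P /(_ x) /=; by rewrite xu xv.
Qed.

Definition br x : gV G := if [pick v | x \in B v] is Some v then v else v0.
Lemma brP x v : x \in B v -> br x = v.
Proof. rewrite /br => xv; case: pickP => [u xu|/(_ v)]; [exact: B_uniq xu xv|by rewrite xv]. Qed.

Lemma br_rep v : br (rep v) = v. Proof. exact: brP (rep_in v). Qed.

Lemma fVi : injective fV. Proof. by case: hemb. Qed.

Definition pre (w : gV G') : option (gV G) := [pick v | fV v == w].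
Lemma preP v : pre (fV v) = Some v.
Proof. rewrite /pre; case: pickP => [u /eqP /fVi -> //|/(_ v)]; by rewrite eqxx. Qed.
Lemma pre_some w v : pre w = Some v -> fV v = w.
Proof. rewrite /pre; case: pickP => [u /eqP <- [->] //|_ //]. Qed.
Lemma pre_none w : pre w = None -> forall v, fV v != w.
Proof. rewrite /pre; case: pickP => [//|Hn _ v]; exact: negbT (Hn v). Qed.

Definition em (w : gV G') : gV H + gV G' := if pre w is Some v then inl (rep v) else inr w.

Definition ends' (e : gE H + gE G') : (gV H + gV G') * (gV H + gV G') :=
  match e with
  | inl h => (inl (gends h).1, inl (gends h).2)
  | inr f => (em (gends f).1, em (gends f).2)
  end.

Lemma noloop' e : (ends' e).1 != (ends' e).2.
Proof.
case: e => [h|f] /=; first by rewrite inj_eq; [exact: gnoloop|move=> a b []].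
have nl := gnoloop f.
rewrite /em; case E1: (pre (gends f).1) => [v1|]; case E2: (pre (gends f).2) => [v2|] //.
  apply/eqP => [][] eq12; move: nl; rewrite -(pre_some E1) -(pre_some E2).
  have r12 : rep v1 \in B v2 by rewrite eq12 rep_in.
  by rewrite (B_uniq (rep_in v1) r12) eqxx.
Qed.

Definition H' : graph := @Graph (gV H + gV G')%type (gE H + gE G')%type ends' noloop'.

Definition internal (h : gE H) : bool := [exists v, ((gends h).1 \in B v) && ((gends h).2 \in B v)].
Definition model (h : gE H) : option (gE G) := [pick g | mE g == h].
Definition delta : R := \rsum_(h in [set: gE H]) eps.

Definition l2 (e : gE H') : R :=
  match e with
  | inl h => if internal h then eps else if model h is Some g then l (fE g) else M
  | inr f => (l f + delta)%R
  end.

Definition isM (e : gE H') : bool :=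
  match e with inl h => ~~ internal h && (model h == None) | inr _ => false end.

Lemma delta_ge0 : (0 <= delta)%R.
Proof. apply: rsum_ge0 => *; lra. Qed.

Lemma model_some h g : model h = Some g -> mE g = h.
Proof. by rewrite /model; case: pickP => [g' /eqP <- [->]|]. Qed.

Lemma model_mE g : model (mE g) = Some g.
Proof. rewrite /model; case: pickP => [g' /eqP /hmEi -> //|/(_ g)]; by rewrite eqxx. Qed.

Lemma mE_ends g : exists x y, [/\ x \in B (gends g).1, y \in B (gends g).2 &
  ((gends (mE g)).1 = x /\ (gends (mE g)).2 = y) \/ ((gends (mE g)).1 = y /\ (gends (mE g)).2 = x)].
Proof.
case: (hmE g) => x [y [xB yB j]]; exists x, y; split => //.
by case/joinsP: j => [][-> ->]; [left|right].
Qed.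

Lemma mE_not_internal g : ~~ internal (mE g).
Proof.
apply/existsP => [][v /andP [h1 h2]].
case: (mE_ends g) => x [y [xB yB [[e1 e2]|[e1 e2]]]]; move: h1 h2; rewrite e1 e2 => h1 h2;
 have := gnoloop g.
  by rewrite (B_uniq xB h1) (B_uniq yB h2) eqxx.
by rewrite (B_uniq xB h2) (B_uniq yB h1) eqxx.
Qed.

Lemma l2_mE g : l2 (inl (mE g)) = l (fE g).
Proof. by rewrite /= (negbTE (mE_not_internal g)) model_mE. Qed.

Lemma l2_pos : length_fun l2.
Proof.
move=> [h|f] /=; last by have := hl f; have := delta_ge0; lra.
case: (internal h) => //; case: (model h) => // g; exact: hl.
Qed.

Lemma l2_ge0 e : (0 <= l2 e)%R. Proof. exact: Rlt_le (l2_pos e). Qed.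

Lemma joins_inl (h : gE H) a b : joins (inl h : gE H') (inl a) (inl b) = joins h a b.
Proof. by rewrite /joins /= !xpair_eqE !(inj_eq (@inl_inj _ _)). Qed.

Lemma emb_inl : embedding (inl : gV H -> gV H') (inl : gE H -> gE H').
Proof.
split; first by move=> a b [].
split; first by move=> a b [].
move=> e; rewrite joins_inl; exact: joins_ends.
Qed.


Definition phi' (z : gV H') : gV G' := match z with inl x => fV (br x) | inr w => w end.
Definition psi' (e : gE H') : option (gE G') :=
  match e with inl h => if internal h then None else omap fE (model h) | inr f => Some f end.

Lemma phi_em w : phi' (em w) = w.
Proof.
rewrite /em; case E: (pre w) => [v|] //=; by rewrite br_rep (pre_some E).
Qed.

Lemma internalP h : internal h -> exists v, ((gends h).1 \in B v) /\ ((gends h).2 \in B v).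
Proof. by case/existsP => v /andP [? ?]; exists v. Qed.

Lemma hpsi' (S : subg H') : (forall e, e \in S.2 -> ~~ isM e) ->
  forall e, e \in S.2 ->
  match psi' e with
  | None => phi' (gends e).1 = phi' (gends e).2
  | Some f => is_true (joins f (phi' (gends e).1) (phi' (gends e).2))
  end.
Proof.
move=> nM e eS; have := nM e eS; case: e eS => [h|f] eS /=; last by move=> _; rewrite !phi_em joins_ends.
case ih: (internal h) => /=.
  by move=> _; case: (internalP ih) => v [h1 h2]; rewrite (brP h1) (brP h2).
case mh: (model h) => [g|] //= _.
have <- := model_some mh.
case: (mE_ends g) => x [y [xB yB [[-> ->]|[-> ->]]]]; rewrite (brP xB) (brP yB).
  by case: hemb => _ [_]; apply.
by rewrite joins_sym; case: hemb => _ [_]; apply.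
Qed.

Lemma inl_branch (e : gE H') a z : ~~ isM e -> joins e (inl a) z -> exists v, a \in B v.
Proof.
move=> nM j.
have ea : inl a = (gends e).1 \/ inl a = (gends e).2 by case/joinsP: j => [][-> _]; [left|right].
case: e nM ea {j} => [h|f] /= nM ea.
  move: nM; case ih: (internal h) => /=.
    case: (internalP ih) => v [h1 h2] _; exists v; by case: ea => [][->].
  case mh: (model h) => [g|] //= _; have eh := model_some mh.
  case: (mE_ends g) => x [y [xB yB]]; rewrite eh => ends.
  by case: ends => [][e1 e2]; case: ea => [][->]; rewrite ?e1 ?e2; eexists; eassumption.
by case: ea; rewrite /em; case: (pre _) => [v|] // [->]; exists v; exact: rep_in.
Qed.

Definition liftQ (Q : subg G) : subg H :=
  (\bigcup_(v in Q.1) B v,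
   [set h | [exists v in Q.1, ((gends h).1 \in B v) && ((gends h).2 \in B v)]] :|: mE @: Q.2).

Lemma liftQ_mem (Q : subg G) v x : v \in Q.1 -> x \in B v -> x \in (liftQ Q).1.
Proof. by move=> vQ xB; apply/bigcupP; exists v. Qed.

Lemma liftQ_subg Q : is_subg Q -> is_subg (liftQ Q).
Proof.
move=> sQ; apply: is_subgI => h; rewrite inE => /orP [|/imsetP [g gQ ->]].
  rewrite inE => /exists_inP [v vQ /andP [h1 h2]]; split; exact: liftQ_mem vQ _.
case: (is_subgP sQ gQ) => g1 g2.
by case: (mE_ends g) => x [y [xB yB [[-> ->]|[-> ->]]]]; split;
  [exact: liftQ_mem g1 xB| exact: liftQ_mem g2 yB| exact: liftQ_mem g2 yB| exact: liftQ_mem g1 xB].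
Qed.

Lemma Bconn v x y : x \in B v -> y \in B v -> connect (adj_in (induced (B v))) x y.
Proof. exact: connP (hBc v). Qed.

Lemma liftQ_conn Q : is_subg Q -> connectedb Q -> connectedb (liftQ Q).
Proof.
move=> sQ cQ.
case/andP: (cQ) => /set0Pn [r rQ] _.
apply: (@connectedI _ (liftQ Q) (rep r)); first exact: liftQ_mem rQ (rep_in r).
move=> z /bigcupP [w wQ zw].
apply: (@blob_conn _ _ (adj_in Q) (adj_in (liftQ Q)) B (fun u => u \in Q.1)) (connP cQ rQ wQ) _ _ (rep_in r) zw.
- by move=> u v /adj_inP [].
- by move=> u _; case: (B_ne u) => x xB; apply/set0Pn; exists x.
- move=> u uQ x y xB yB; apply: connect_mono (Bconn xB yB) => a b /adj_inP [aB bB [h hI j]].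
  apply: connect1; apply: (@adj_inI _ (liftQ Q) a b h); [exact: liftQ_mem uQ aB|exact: liftQ_mem uQ bB| |done].
  rewrite inE; apply/orP; left; rewrite inE; apply/exists_inP; exists u => //.
  by move: hI; rewrite inE.
- move=> u v /adj_inP [uQ vQ [g gQ j]].
  case: (hmE g) => x [y [xB yB jm]].
  have mQ : mE g \in (liftQ Q).2 by rewrite inE; apply/orP; right; exact: imset_f.
  case: (is_subgP sQ gQ) => g1 g2.
  case/joinsP: j => [][eu ev].
    exists x, y; rewrite eu ev; split; [exact: xB|exact: yB|]; apply: connect1.
    exact: (@adj_inI _ (liftQ Q) x y (mE g) (liftQ_mem g1 xB) (liftQ_mem g2 yB) mQ jm).
  exists y, x; rewrite eu ev; split; [exact: yB|exact: xB|]; apply: connect1.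
  by apply: (@adj_inI _ (liftQ Q) y x (mE g) (liftQ_mem g2 yB) (liftQ_mem g1 xB) mQ); rewrite joins_sym.
- exact: rQ.
Qed.

Lemma liftQ_cost Q :
  (glength (fun h => l2 (inl h)) (liftQ Q) <= delta + glength (fun g => l (fE g)) Q)%R.
Proof.
rewrite !glengthE /=.
apply: Rle_trans (rsum_U _ _ (fun h => l2_ge0 (inl h))) _.
apply: Rplus_le_compat.
  apply: Rle_trans (_ : \rsum_(h in [set h | [exists v in Q.1, ((gends h).1 \in B v) && ((gends h).2 \in B v)]]) eps <= _)%R.
    apply: Req_le; apply: eq_bigr => h; rewrite inE => /exists_inP [v _ hv] /=.
    suff -> : internal h by [].
    by apply/existsP; exists v.
  rewrite /delta; apply: rsum_sub; [move=> *; lra|exact: subsetT].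
rewrite rsum_imset_inj //; apply: Req_le; apply: eq_bigr => g _; exact: l2_mE.
Qed.

Definition cc (e : gE H') : R := match psi' e with Some f => l f | None => 0%R end.

Lemma cc_le e : ~~ isM e -> (cc e <= l2 e)%R.
Proof.
rewrite /cc; case: e => [h|f] /=; last by have := delta_ge0; lra.
case ih: (internal h) => /=; first lra.
case mh: (model h) => [g|] //= _; lra.
Qed.

Lemma base_case (S : subg H') (A : {set gV H}) : #|A| <= k -> valid [set (inl a : gV H') | a in A] S ->
  (forall e, e \in S.2 -> ~~ isM e) ->
  exists2 T, valid A T & (glength (fun h => l2 (inl h)) T <= glength l2 S)%R.
Proof.
move=> hA vS nM; case/and3P: (vS) => sS cS aS.
case: (boolP [exists f, inr f \in S.2]) => [/existsP [f0 f0S] | noinr].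
  pose A' := [set v | [exists a in A, a \in B v]].
  have hp := hpsi' nM.
  have vP : valid (fV @: A') (himg phi' psi' S).
    apply/and3P; split; [exact: himg_subg sS hp | exact: himg_conn hp cS | ].
    apply/subsetP => w /imsetP [v vA' ->]; move: vA'; rewrite inE => /exists_inP [a aA av].
    apply/imsetP; exists (inl a); first by apply: (subsetP aS); exact: imset_f.
    by rewrite /= (brP av).
  have hA' : #|A'| <= k.
    apply: leq_trans _ hA; apply: leq_trans (leq_imset_card br A); apply: subset_leq_card.
    apply/subsetP => v; rewrite inE => /exists_inP [a aA av]; apply/imsetP; exists a => //.
    by rewrite (brP av).
  have eq := hkg hA'.
  case: (sd_exists l vP) => c Ec.
  case: (sd_Some Ec) => [_ mc]; have cP := mc _ vP.
  rewrite -eq in Ec; case: (sd_Some Ec) => [[Q [vQ hQ]] _].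
  case/and3P: vQ => sQ cQ aQ.
  exists (liftQ Q).
    apply/and3P; split; [exact: liftQ_subg | exact: liftQ_conn|].
    apply/subsetP => a aA.
    have aS1 : inl a \in S.1 by apply: (subsetP aS); exact: imset_f.
    have [z [zS za]] : exists z, z \in S.1 /\ z != inl a.
      case: (is_subgP sS f0S) => e1 e2.
      case: (eqVneq (gends (inr f0 : gE H')).1 (inl a)) => [E|ne]; last by exists (gends (inr f0 : gE H')).1.
      exists (gends (inr f0 : gE H')).2; split => //; rewrite -E eq_sym; exact: gnoloop.
    have := connect_step (connP cS aS1 zS); rewrite eq_sym za => /(_ isT) [z' /adj_inP [_ _ [e eS j]]].
    case: (inl_branch (nM e eS) j) => v av.
    apply: (liftQ_mem (v := v) _ av); apply: (subsetP aQ); rewrite /A' inE; apply/exists_inP; by exists a.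
  apply: Rle_trans (liftQ_cost Q) _; rewrite hQ.
  apply: Rle_trans (_ : delta + \rsum_(e in S.2) cc e <= _)%R.
    apply: Rplus_le_compat_l; apply: Rle_trans cP _; apply: (himg_cost phi' psi' S).
    move=> f; exact: Rlt_le (hl f).
  rewrite glengthE (rsumD1 cc f0S) (rsumD1 (fun e => l2 e) f0S).
  have : (\rsum_(y in S.2 :\ inr f0) cc y <= \rsum_(y in S.2 :\ inr f0) l2 y)%R.
    apply: rsum_le => e; rewrite inE => /andP [_ eS]; exact: cc_le (nM e eS).
  have -> : cc (inr f0) = l f0 by [].
  have -> : l2 (inr f0) = (l f0 + delta)%R by [].
  move=> h; rewrite -Rplus_assoc (Rplus_comm delta); apply: Rplus_le_compat_l; exact: h.
case: (boolP [exists w, inr w \in S.1]) => [/existsP [w wS] | noinrV].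
  have A0 : A = set0.
    apply/eqP; rewrite -subset0; apply/subsetP => a aA.
    have aS1 : inl a \in S.1 by apply: (subsetP aS); exact: imset_f.
    have := connect_step (connP cS wS aS1) isT => [][z /adj_inP [_ _ [e eS j]]].
    case: e eS j => [h|f] eS j; last by move: noinr; rewrite negb_exists => /forallP /(_ f); rewrite eS.
    by case/joinsP: j => [][].
  exists ([set rep v0], set0).
    rewrite A0; apply/and3P; split; [by apply: is_subgI => f; rewrite inE| |by rewrite sub0set].
    apply: (@connectedI _ ([set rep v0], set0) (rep v0)); first by rewrite inE.
    by move=> z; rewrite inE => /eqP ->; rewrite connect0.
  rewrite glengthE /= big_set0; apply: glength_ge0; exact: l2_pos.
have isl : forall z, z \in S.1 -> exists x, z = inl x.
  move=> [x|w] zS; first by exists x.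
  by move: noinrV; rewrite negb_exists => /forallP /(_ w); rewrite zS.
have isle : forall e, e \in S.2 -> exists h, e = inl h.
  move=> [h|f] eS; first by exists h.
  by move: noinr; rewrite negb_exists => /forallP /(_ f); rewrite eS.
pose T : subg H := ([set x | inl x \in S.1], [set h | inl h \in S.2]).
exists T.
  apply/and3P; split.
  - apply: is_subgI => h; rewrite inE => hS; case: (is_subgP sS hS) => /= h1 h2.
    by rewrite !inE.
  - case/andP: (cS) => /set0Pn [z zS] _; case: (isl z zS) => x ex; subst z.
    apply: (@connectedI _ T x); first by rewrite inE.
    move=> y; rewrite inE => yS.
    pose r (z : gV H') := match z with inl a => a | inr _ => x end.
    apply: (connect_map (e := adj_in S) (f := r)) (connP cS zS yS) => a b /adj_inP [aS1 bS1 [e eS j]].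
    case: (isl a aS1) => a' ea; case: (isl b bS1) => b' eb; case: (isle e eS) => h eh; subst a b e.
    apply: connect1; apply: (@adj_inI _ T a' b' h); rewrite ?inE //.
  - by apply/subsetP => a aA; rewrite inE; apply: (subsetP aS); exact: imset_f.
rewrite !glengthE.
have -> : \rsum_(h in T.2) l2 (inl h) = \rsum_(e in inl @: T.2) l2 e by rewrite rsum_imset_inj //; move=> a b [].
apply: rsum_sub => //; first by move=> *; exact: l2_ge0.
by apply/subsetP => e /imsetP [h hT ->]; move: hT; rewrite inE.
Qed.

Lemma main_sim n : forall (S : subg H') (A : {set gV H}), #|S.2| < n -> #|A| <= k ->
  valid [set (inl a : gV H') | a in A] S ->
  exists2 T, valid A T & (glength (fun h => l2 (inl h)) T <= glength l2 S)%R.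
Proof.
elim: n => [//|n IH] S A hS hA vS.
case: (exists_minimal vS) => S0 [mS0 sub0].
have cost0 := cost_sub l2_pos sub0.
have hS0 : #|S0.2| <= #|S.2| by apply: subset_leq_card; case/andP: sub0.
case: (boolP [exists e in S0.2, isM e]) => [/exists_inP [e eS0 Me] | noM]; last first.
  have nM : forall e, e \in S0.2 -> ~~ isM e.
    by move=> e eS; apply/negP => Me; move: noM; rewrite negb_exists_in => /forall_inP /(_ e eS) /negP.
  case: (base_case hA (proj1 mS0) nM) => T vT cT; exists T => //; lra.
case: e eS0 Me => [h|f] eS0 Me //.
pose x : gV H' := inl (gends h).1.
pose y : gV H' := inl (gends h).2.
have jxy : joins (inl h : gE H') x y by exact: (joins_ends (inl h : gE H')).
have jyx : joins (inl h : gE H') y x by rewrite joins_sym.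
pose AX := [set a in A | (inl a : gV H') \in side S0 (inl h) x].
pose AY := [set a in A | (inl a : gV H') \in side S0 (inl h) y].
have disj := sides_disj l2 mS0 eS0 jxy.
have notboth : forall a, (inl a : gV H') \in side S0 (inl h) x -> (inl a : gV H') \in side S0 (inl h) y -> False.
  by move=> a ax ay; move: disj => /pred0P /(_ (inl a)) /=; rewrite ax ay.
have cardX : forall (z w : gV H) (AZ : {set gV H}), AZ \subset A -> w \in A -> w \notin AZ ->
    #|z |: AZ| <= k.
  move=> z w AZ sZ wA wZ; apply: leq_trans _ hA.
  rewrite cardsU1; apply: leq_trans (_ : 1 + #|AZ| <= _); first by case: (z \in AZ).
  rewrite add1n (cardsD1 w A) wA add1n ltnS; apply: subset_leq_card.
  apply/subsetP => a aZ; rewrite !inE (subsetP sZ a aZ) andbT; apply/eqP => ea; subst a.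
  by move: wZ; rewrite aZ.
case: (side_has_A l2 mS0 eS0 jyx) => _ /imsetP [a1 a1A ->] a1y.
case: (side_has_A l2 mS0 eS0 jxy) => _ /imsetP [a2 a2A ->] a2x.
have sAX : AX \subset A by apply/subsetP => a; rewrite inE => /andP [].
have sAY : AY \subset A by apply/subsetP => a; rewrite inE => /andP [].
have hAX : #|(gends h).1 |: AX| <= k.
  apply: (cardX _ a1 _ sAX a1A); rewrite inE a1A /=; apply/negP => a1x; exact: notboth a1x a1y.
have hAY : #|(gends h).2 |: AY| <= k.
  apply: (cardX _ a2 _ sAY a2A); rewrite inE a2A /=; apply/negP => a2y; exact: notboth a2x a2y.
have vside : forall (z w : gV H') (AZ : {set gV H}) (jzw : joins (inl h : gE H') z w) (z' : gV H),
    z = inl z' -> (forall a, a \in AZ -> (inl a : gV H') \in side S0 (inl h) z) ->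
    valid [set (inl a : gV H') | a in z' |: AZ] (Sside S0 (inl h) z).
  move=> z w AZ jzw z' ez hAZ; apply/and3P; split; [exact: Sside_subg|have := Sside_conn mS0 eS0 jzw; exact|].
  apply/subsetP => b /imsetP [a aZ' ->]; move: aZ'; rewrite in_setU1 => /orP [/eqP ->|aZ]; last exact: hAZ.
  rewrite /= -ez; have := x_side mS0 eS0 jzw; exact.
have hX : forall a, a \in AX -> (inl a : gV H') \in side S0 (inl h) x by move=> a; rewrite inE => /andP [].
have hY : forall a, a \in AY -> (inl a : gV H') \in side S0 (inl h) y by move=> a; rewrite inE => /andP [].
have vX := vside _ _ AX jxy (gends h).1 erefl hX.
have vY := vside _ _ AY jyx (gends h).2 erefl hY.
have cardS : forall z, #|(Sside S0 (inl h) z).2| < n.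
  move=> z; rewrite -ltnS; apply: leq_trans hS; rewrite ltnS; apply: leq_trans hS0.
  rewrite (cardsD1 (inl h) S0.2) eS0 add1n ltnS; apply: subset_leq_card.
  apply/subsetP => f /Sside_edge [fS fne _ _]; by rewrite !inE fne fS.
case: (IH _ _ (cardS x) hAX vX) => TX vTX cTX.
case: (IH _ _ (cardS y) hAY vY) => TY vTY cTY.
case/and3P: vTX => sTX cTXc aTX; case/and3P: vTY => sTY cTYc aTY.
have x1 : (gends h).1 \in TX.1 by apply: (subsetP aTX); rewrite setU11.
have y1 : (gends h).2 \in TY.1 by apply: (subsetP aTY); rewrite setU11.
pose T : subg H := (TX.1 :|: TY.1, TX.2 :|: TY.2 :|: [set h]).
have sXT1 : TX.1 \subset T.1 by exact: subsetUl.
have sYT1 : TY.1 \subset T.1 by exact: subsetUr.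
have sXT2 : TX.2 \subset T.2 by rewrite /T /=; apply: subset_trans (subsetUl _ _) (subsetUl _ _).
have sYT2 : TY.2 \subset T.2 by rewrite /T /=; apply: subset_trans (subsetUr _ _) (subsetUl _ _).
exists T.
  apply/and3P; split.
  - apply: is_subgI => f; rewrite /T /= !inE => /orP [/orP [fX|fY]|/eqP ->].
    + by case: (is_subgP sTX fX) => a b; rewrite ?inE a b.
    + by case: (is_subgP sTY fY) => a b; rewrite ?inE a b !orbT.
    + by rewrite ?inE x1 y1 orbT.
  - apply: (@connectedI _ T (gends h).1); first by rewrite /T /= inE x1.
    move=> z; rewrite /T /= inE => /orP [zX|zY].
      by apply: connect_mono (connP cTXc x1 zX) => a b ab; apply: connect1; exact: adj_mono sXT1 sXT2 ab.
    apply: (@connect_trans _ _ (gends h).2).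
      apply: connect1; apply: (@adj_inI _ T _ _ h); rewrite /T /= ?inE ?x1 ?y1 ?orbT ?eqxx //.
      by rewrite orbT.
    by apply: connect_mono (connP cTYc y1 zY) => a b ab; apply: connect1; exact: adj_mono sYT1 sYT2 ab.
  - apply/subsetP => a aA.
    have aS0 : (inl a : gV H') \in S0.1 by case/and3P: (proj1 mS0) => _ _ /subsetP; apply; exact: imset_f.
    case/orP: (sides_cover l2 mS0 eS0 jxy aS0) => ha; rewrite /T /= inE.
      by rewrite (subsetP aTX) //; rewrite in_setU1 inE aA ha orbT.
    by rewrite (subsetP aTY) ?orbT //; rewrite in_setU1 inE aA ha orbT.
have bc := bridge_cost mS0 eS0 l2_pos jxy.
have u1 := rsum_U (TX.2 :|: TY.2) [set h] (fun h => l2_ge0 (inl h)).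
have u2 := rsum_U TX.2 TY.2 (fun h => l2_ge0 (inl h)).
move: cTX cTY bc; rewrite !glengthE => cTX cTY bc.
rewrite big_set1 in u1.
move: cost0; rewrite !glengthE => cost0.
have -> : T.2 = TX.2 :|: TY.2 :|: [set h] by [].
lra.
Qed.

Lemma kgeo : @k_geodesic k H H' inl inl l2.
Proof.
move=> A hA; apply: sd_eq.
  move=> S vS; case: (embed_valid l2 emb_inl vS) => S' vS' e; exists S' => //; rewrite e; exact: Rle_refl.
move=> S vS; exact: (@main_sim #|S.2|.+1 S A (ltnSn _) hA vS).
Qed.

Section Witness.
Variables (A0 : {set gV G}) (S' : subg G') (c g : R).
Hypotheses (vS' : valid (fV @: A0) S') (hc : glength l S' = c)
  (hgap : forall Q, valid A0 Q -> (c + g <= glength (fun e => l (fE e)) Q)%R)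
  (hsmall : (delta + INR #|gE G'| * delta < g)%R) (hMbig : (c + g <= M)%R).

Definition X1 : {set gV H} := \bigcup_(v | fV v \in S'.1) B v.
Definition Y1 : {set gV G'} := [set w in S'.1 | pre w == None].
Definition Xh : {set gE H} :=
  [set h | [exists v, (fV v \in S'.1) && ((gends h).1 \in B v) && ((gends h).2 \in B v)]].
Definition L : subg H' :=
  ([set (inl x : gV H') | x in X1] :|: [set (inr w : gV H') | w in Y1],
   [set (inl h : gE H') | h in Xh] :|: [set (inr f : gE H') | f in S'.2]).
Definition beta (w : gV G') : {set gV H'} :=
  if pre w is Some v then [set (inl x : gV H') | x in B v] else [set (inr w : gV H')].

Lemma em_beta w : em w \in beta w.
Proof. rewrite /em /beta; case: (pre w) => [v|]; [apply: imset_f; exact: rep_in|exact: set11]. Qed.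

Lemma X1_mem v x : fV v \in S'.1 -> x \in B v -> x \in X1.
Proof. by move=> vS xB; apply/bigcupP; exists v. Qed.

Lemma beta_L w : w \in S'.1 -> beta w \subset L.1.
Proof.
move=> wS; rewrite /beta; case E: (pre w) => [v|]; apply/subsetP => z.
  case/imsetP => x xB ->; rewrite inE; apply/orP; left; apply: imset_f.
  by apply: (X1_mem _ xB); rewrite (pre_some E).
rewrite inE => /eqP ->; rewrite inE; apply/orP; right; apply: imset_f.
by rewrite inE wS E.
Qed.

Lemma L1_beta z : z \in L.1 -> exists2 w, w \in S'.1 & z \in beta w.
Proof.
rewrite inE => /orP [] /imsetP [x xX ->].
  case/bigcupP: xX => v vS xB; exists (fV v) => //; rewrite /beta preP; exact: imset_f.
move: xX; rewrite inE => /andP [xS /eqP E]; exists x => //; by rewrite /beta E inE.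
Qed.

Lemma L_subg : is_subg L.
Proof.
apply: is_subgI => e; rewrite inE => /orP [] /imsetP [h hX ->].
  move: hX; rewrite inE => /existsP [v /andP [/andP [vS h1] h2]].
  by split; rewrite /= inE; apply/orP; left; apply: imset_f; exact: X1_mem vS _.
case/and3P: vS' => sS' _ _; case: (is_subgP sS' hX) => h1 h2.
by split; apply: (subsetP (beta_L _)); [exact: h1|exact: em_beta|exact: h2|exact: em_beta].
Qed.

Lemma L_conn : connectedb L.
Proof.
case/and3P: vS' => sS' cS' _.
case/andP: (cS') => /set0Pn [wr wrS] _.
apply: (@connectedI _ L (em wr)); first exact: (subsetP (beta_L wrS)) _ (em_beta wr).
move=> z /L1_beta [w wS zw].
apply: (@blob_conn _ _ (adj_in S') (adj_in L) beta (fun u => u \in S'.1)) (connP cS' wrS wS) _ _ (em_beta wr) zw.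
- by move=> u v /adj_inP [].
- by move=> u _; apply/set0Pn; exists (em u); exact: em_beta.
- move=> u uS x y; rewrite /beta; case E: (pre u) => [v|]; last by rewrite !inE => /eqP -> /eqP ->; exact: connect0.
  move=> /imsetP [x' x'B ->] /imsetP [y' y'B ->].
  have vS : fV v \in S'.1 by rewrite (pre_some E).
  apply: (connect_map (e := adj_in (induced (B v)))) (Bconn x'B y'B) => a b /adj_inP [aB bB [h hI j]].
  apply: connect1; apply: (@adj_inI _ L (inl a) (inl b) (inl h)).
  + by rewrite inE; apply/orP; left; apply: imset_f; exact: X1_mem vS aB.
  + by rewrite inE; apply/orP; left; apply: imset_f; exact: X1_mem vS bB.
  + rewrite inE; apply/orP; left; apply: imset_f; rewrite inE; apply/existsP; exists v.
    by move: hI; rewrite /= inE vS => ->.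
  + by rewrite joins_inl.
- move=> u v /adj_inP [uS vS [f fS j]]; exists (em u), (em v); split; [exact: em_beta|exact: em_beta|].
  apply: connect1; apply: (@adj_inI _ L (em u) (em v) (inr f)).
  + exact: (subsetP (beta_L uS)) _ (em_beta u).
  + exact: (subsetP (beta_L vS)) _ (em_beta v).
  + by rewrite inE; apply/orP; right; apply: imset_f.
  + by case/joinsP: j => [][-> ->]; [exact: (joins_ends (inr f : gE H'))|rewrite joins_sym; exact: (joins_ends (inr f : gE H'))].
- exact: wrS.
Qed.

Lemma L_valid : valid [set (inl a : gV H') | a in rep @: A0] L.
Proof.
apply/and3P; split; [exact: L_subg|exact: L_conn|].
case/and3P: vS' => _ _ aS'.
apply/subsetP => z /imsetP [x /imsetP [v vA ->] ->].
rewrite inE; apply/orP; left; apply: imset_f; apply: (X1_mem _ (rep_in v)).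
by apply: (subsetP aS'); exact: imset_f.
Qed.

Lemma L_cost : (glength l2 L <= delta + c + INR #|gE G'| * delta)%R.
Proof.
rewrite glengthE /=.
apply: Rle_trans (rsum_U _ _ l2_ge0) _.
rewrite !rsum_imset_inj; try by move=> a b [].
have e1 : (\rsum_(h in Xh) l2 (inl h) <= delta)%R.
  apply: Rle_trans (_ : \rsum_(h in Xh) eps <= _)%R.
    apply: Req_le; apply: eq_bigr => h; rewrite inE => /existsP [v /andP [/andP [_ h1] h2]] /=.
    suff -> : internal h by [].
    by apply/existsP; exists v; rewrite h1 h2.
  rewrite /delta; apply: rsum_sub; [move=> *; lra|exact: subsetT].
have e2 : \rsum_(f in S'.2) l2 (inr f) = (\rsum_(f in S'.2) l f + \rsum_(f in S'.2) delta)%R.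
  by rewrite -rsum_split.
have e3 : (\rsum_(f in S'.2) delta <= INR #|gE G'| * delta)%R.
  rewrite -cardsT -rsum_const; apply: rsum_sub; [move=> *; exact: delta_ge0|exact: subsetT].
have hc2 : \rsum_(f in S'.2) l f = c by rewrite -hc glengthE.
rewrite e2 hc2.
apply: Rle_trans (Rplus_le_compat _ _ _ _ e1 (Rplus_le_compat_l c _ _ e3)) _; rewrite Rplus_assoc; exact: Rle_refl.
Qed.

Lemma T_lower (T : subg H) : valid (rep @: A0) T ->
  (c + g <= glength (fun h => l2 (inl h)) T)%R.
Proof.
move=> vT; case/and3P: (vT) => sT cT aT.
case: (boolP [exists h in T.2, isM (inl h)]) => [/exists_inP [h hT Mh]|noM].
  rewrite glengthE (rsumD1 _ hT).
  have : (0 <= \rsum_(y in T.2 :\ h) l2 (inl y))%R by apply: rsum_ge0 => *; exact: l2_ge0.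
  move: Mh => /= /andP [/negbTE -> /eqP ->]; lra.
have nM : forall h, h \in T.2 -> ~~ isM (inl h).
  by move=> h hT; apply/negP => Mh; move: noM; rewrite negb_exists_in => /forall_inP /(_ h hT) /negP.
pose psi (h : gE H) : option (gE G) := if internal h then None else model h.
have hp : forall h, h \in T.2 ->
  match psi h with
  | None => br (gends h).1 = br (gends h).2
  | Some f => is_true (joins f (br (gends h).1) (br (gends h).2))
  end.
  move=> h hT; have := nM h hT; rewrite /psi /=.
  case ih: (internal h) => /=.
    by move=> _; case: (internalP ih) => v [h1 h2]; rewrite (brP h1) (brP h2).
  case mh: (model h) => [g'|] //= _.
  have <- := model_some mh.
  case: (mE_ends g') => x [y [xB yB [[-> ->]|[-> ->]]]]; rewrite (brP xB) (brP yB).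
    exact: joins_ends.
  by rewrite joins_sym; exact: joins_ends.
have vP : valid A0 (himg br psi T).
  apply/and3P; split; [exact: himg_subg sT hp|exact: himg_conn hp cT|].
  apply/subsetP => v vA; apply/imsetP; exists (rep v); last by rewrite br_rep.
  by apply: (subsetP aT); exact: imset_f.
apply: Rle_trans (hgap vP) _.
apply: Rle_trans (himg_cost br psi T (l := fun e => l (fE e)) (fun f => Rlt_le _ _ (hl (fE f)))) _.
rewrite glengthE; apply: rsum_le => h hT; have := nM h hT; rewrite /psi /=.
case: (internal h) => /=; first by move=> _; lra.
by case: (model h) => [g'|] //= _; lra.
Qed.

Lemma gap_neq :
  sd (fun h => l2 (inl h)) (rep @: A0) <> sd l2 [set (inl a : gV H') | a in rep @: A0].
Proof.
apply: (sd_neq L_valid) => T vT.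
have := T_lower vT; have := L_cost; lra.
Qed.

End Witness.

End Construction.

Theorem theorem6p1 (k : nat) : 2 <= k ->
  forall H G : graph, in_Hk k H -> minor G H -> in_Hk k G.
Proof.
move=> _ H G hH [B [mE [hBc [hBd [hmEi hmE]]]]] G' fV fE l hemb hl hkg A0.
case: (pickP (fun _ : gV G => true)) => [v0 _ | noV]; last first.
  have -> : A0 = set0 by apply/setP => v; have := noV v.
  by apply: hkg; rewrite cards0.
case: (classic (sd (fun e => l (fE e)) A0 = sd l (fV @: A0))) => // neq.
exfalso.
case: (witness hemb hl neq) => S' [c [g [vS' hc hg hgap]]].
have c0 : (0 <= c)%R by rewrite -hc; exact: glength_ge0.
pose N := INR #|gE H|.
pose N2 := INR #|gE G'|.
have N0 : (0 <= N)%R by apply: pos_INR.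
have N20 : (0 <= N2)%R by apply: pos_INR.
pose eps := (g / (4 * (N + 1) * (N2 + 1)))%R.
have den : (0 < 4 * (N + 1) * (N2 + 1))%R by apply: Rmult_lt_0_compat; [lra|lra].
have heps : (0 < eps)%R by apply: Rdiv_lt_0_compat.
have key : (eps * (4 * (N + 1) * (N2 + 1)) = g)%R by rewrite /eps; field; lra.
pose M := (c + g + 1)%R.
have hM : (0 < M)%R by rewrite /M; lra.
have hdelta : delta H eps = (N * eps)%R by rewrite /delta rsum_const cardsT.
have hsmall : (delta H eps + N2 * delta H eps < g)%R.
  rewrite hdelta.
  have h : (0 < eps * ((1 + N2) * (3 * N + 4)))%R.
    apply: Rmult_lt_0_compat => //; apply: Rmult_lt_0_compat; lra.
  nra.
have hMbig : (c + g <= M)%R by rewrite /M; lra.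
apply: (gap_neq v0 hmE hemb hl heps hM vS' hc hgap hsmall hMbig).
exact: (hH _ _ _ _ (emb_inl fV hBc hBd) (l2_pos mE fE hl heps hM)
  (kgeo v0 hBc hBd hmEi hmE hemb hl hkg heps hM)).
Qed.
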